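(* Let $n\ge 6$ and let $G$ be a $4$-Sachs minimal graph in $\mathfrak{G}_{n,2n-4}$. If $\Delta(G)=n-2$, then $G$ is the complete bipartite graph $K_{2,n-2}$.
   Context: $\mathfrak{G}_{n,m}$ is the set of connected simple graphs with $n$ vertices and $m$ edges. $\mathbf{a}_4(G)$ is the coefficient of $\lambda^{n-4}$ in $\det(\lambda\mathbf{I}-\mathbf{A}(G))$ (equivalently, number of 2-matchings minus twice the number of 4-cycles). $G\in\mathfrak{G}_{n,m}$ is $4$-Sachs minimal if $\mathbf{a}_4(G)=\min\{\mathbf{a}_4(H):H\in\mathfrak{G}_{n,m}\}$. $\Delta(G)$ is the maximum degree. *)

(* Defs.v *)
From mathcomp Require Import all_boot all_order all_algebra.
Set Implicit Arguments. Unset Strict Implicit. Unset Printing Implicit Defensive.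
Import GRing.Theory Num.Theory.

(* A simple graph on the vertex set 'I_n is given by its edge set:
   a set of 2-element subsets of 'I_n. *)
Definition is_simple (n : nat) (E : {set {set 'I_n}}) : bool :=
  [forall e in E, #|e| == 2].

Definition adj (n : nat) (E : {set {set 'I_n}}) : rel 'I_n :=
  fun x y => (x != y) && ([set x; y] \in E).

Definition deg (n : nat) (E : {set {set 'I_n}}) (v : 'I_n) : nat :=
  #|[set w | adj E v w]|.

Definition max_deg (n : nat) (E : {set {set 'I_n}}) : nat :=
  \max_(v : 'I_n) deg E v.

Definition connected_graph (n : nat) (E : {set {set 'I_n}}) : bool :=
  [forall x, forall y, connect (adj E) x y].

Definition in_Gnm (n m : nat) (E : {set {set 'I_n}}) : bool :=
  [&& is_simple E, connected_graph E & #|E| == m].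

Definition two_matchings (n : nat) (E : {set {set 'I_n}}) : {set {set {set 'I_n}}} :=
  [set M : {set {set 'I_n}} | [&& M \subset E, #|M| == 2 &
     [forall e1 in M, forall e2 in M, (e1 != e2) ==> [disjoint e1 & e2]]]].

Definition vset (n : nat) (C : {set {set 'I_n}}) : {set 'I_n} :=
  \bigcup_(e in C) e.

(* 4-cycles, as subgraphs: sets of 4 edges of E spanning exactly 4 vertices,
   each of which lies in exactly 2 of the edges (a 2-regular graph on 4
   vertices is exactly a 4-cycle). *)
Definition four_cycles (n : nat) (E : {set {set 'I_n}}) : {set {set {set 'I_n}}} :=
  [set C : {set {set 'I_n}} | [&& C \subset E, #|C| == 4, #|vset C| == 4 &
     [forall v in vset C, #|[set e in C | v \in e]| == 2]]].

Definition a4 (n : nat) (E : {set {set 'I_n}}) : int :=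
  (#|two_matchings E|%:Z - 2%:Z * #|four_cycles E|%:Z)%R.

Definition sachs4_minimal (n m : nat) (E : {set {set 'I_n}}) : Prop :=
  in_Gnm m E /\ forall H : {set {set 'I_n}}, in_Gnm m H -> (a4 E <= a4 H)%R.

Definition is_complete_bipartite (n p q : nat) (E : {set {set 'I_n}}) : Prop :=
  exists A B : {set 'I_n},
    [/\ [disjoint A & B], A :|: B = [set: 'I_n], #|A| = p, #|B| = q &
        E = [set [set x; y] | x in A, y in B]].

(* Main.v *)
Require Import Defs.
From mathcomp Require Import all_boot all_order all_algebra.
From mathcomp Require Import zify.
Set Implicit Arguments. Unset Strict Implicit. Unset Printing Implicit Defensive.

Lemma card_fiber (T U : finType) (S : {set T}) (F : {set U}) (f : T -> U) k :
  (forall p, p \in S -> f p \in F) ->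
  (forall u, u \in F -> #|[set p in S | f p == u]| = k) -> #|S| = k * #|F|.
Proof.
move=> hS hF.
rewrite -sum1_card (partition_big f (mem F)) //=.
rewrite mulnC -sum_nat_const; apply: eq_bigr => u uF.
by rewrite sum1dep_card hF.
Qed.

Lemma set2_eqP (T : finType) (a b x y : T) : x != y ->
  [set a; b] = [set x; y] -> (a = x /\ b = y) \/ (a = y /\ b = x).
Proof.
move=> nxy h.
have ha : a \in [set x; y] by rewrite -h set21.
have hb : b \in [set x; y] by rewrite -h set22.
have hx : x \in [set a; b] by rewrite h set21.
have hy : y \in [set a; b] by rewrite h set22.
case/set2P: ha => ea; case/set2P: hb => eb; subst; auto.
- by case/set2P: hy => e; subst; rewrite eqxx in nxy.
- by case/set2P: hx => e; subst; rewrite eqxx in nxy.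
Qed.

Lemma card2_set (T : finType) (x y : T) : x != y -> #|[set x; y]| = 2.
Proof. by move=> h; rewrite cards2 h. Qed.

Lemma card_sum2 (T : finType) (P : T -> T -> bool) :
  #|[set p : T * T | P p.1 p.2]| = \sum_x \sum_y (P x y : nat).
Proof.
rewrite -sum1dep_card. rewrite pair_big /=. rewrite big_mkcond /=.
by apply: eq_bigr => p _; case: (P _ _).
Qed.

Lemma card_sum4 (T : finType) (P : T -> T -> T -> T -> bool) :
  #|[set p : T * T * T * T | P p.1.1.1 p.1.1.2 p.1.2 p.2]| =
  \sum_x \sum_y \sum_z \sum_t (P x y z t : nat).
Proof.
rewrite -sum1dep_card pair_big /= pair_big /= pair_big /= big_mkcond /=.
by apply: eq_bigr => p _; case: (P _ _ _ _).
Qed.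

Lemma card_sum22 (T : finType) (P : T -> T -> T -> T -> bool) :
  #|[set p : (T * T) * (T * T) | P p.1.1 p.1.2 p.2.1 p.2.2]| =
  \sum_x \sum_y \sum_z \sum_t (P x y z t : nat).
Proof.
rewrite -sum1dep_card.
under [RHS]eq_bigr do under eq_bigr do rewrite pair_big /=.
rewrite pair_big /= pair_big /= big_mkcond /=.
by apply: eq_bigr => p _; case: (P _ _ _ _).
Qed.

Lemma disj2 (T : finType) (a b c d : T) :
  c != a -> c != b -> d != a -> d != b -> [disjoint [set a; b] & [set c; d]].
Proof.
move=> ca cb da db; rewrite disjoints_subset; apply/subsetP => x; rewrite !inE.
by case/orP=> /eqP->; rewrite negb_or; apply/andP; split; rewrite eq_sym.
Qed.

Lemma disj2_inv (T : finType) (a b c d : T) :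
  [disjoint [set a; b] & [set c; d]] -> [/\ c != a, c != b, d != a & d != b].
Proof.
move=> h.
have hc := disjointFl h (set21 c d); have hd := disjointFl h (set22 c d).
move/negbT: hc; move/negbT: hd; rewrite !inE !negb_or => /andP[-> ->] /andP[-> ->] //.
Qed.

Lemma adjE n (E : {set {set 'I_n}}) x y : adj E x y = (x != y) && ([set x; y] \in E).
Proof. by []. Qed.

Lemma adj_sym n (E : {set {set 'I_n}}) : symmetric (adj E).
Proof. by move=> x y; rewrite !adjE eq_sym setUC. Qed.

Lemma adj_irr n (E : {set {set 'I_n}}) : irreflexive (adj E).
Proof. by move=> x; rewrite adjE eqxx. Qed.

Lemma edge2 n (E : {set {set 'I_n}}) e : is_simple E -> e \in E ->
  exists x y, [/\ x != y, e = [set x; y] & adj E x y].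
Proof.
move=> /forall_inP hs eE; case/cards2P: (hs e eE) => x [y [nxy ee]].
by exists x, y; split=> //; rewrite adjE nxy -ee.
Qed.

Lemma handshake_set n (F : {set {set 'I_n}}) : is_simple F ->
  #|[set p : 'I_n * 'I_n | adj F p.1 p.2]| = 2 * #|F|.
Proof.
move=> hs.
apply: (card_fiber (f := fun p : 'I_n * 'I_n => [set p.1; p.2])).
  by move=> [a b]; rewrite inE /= adjE => /andP[].
move=> e eF; have [x [y [nxy ee axy]]] := edge2 hs eF.
rewrite -(card2_set (_ : (x, y) != (y, x))); last first.
  by rewrite xpair_eqE negb_and nxy.
apply: eq_card => -[a b]; rewrite !inE /= adjE.
apply/idP/idP.
  case/andP => /andP [nab _] /eqP; rewrite ee => /(set2_eqP nxy) [[-> ->]|[-> ->]];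
  by rewrite eqxx ?orbT.
by case/orP => /eqP [-> ->]; rewrite ?nxy -?ee ?eF ?eqxx // eq_sym nxy setUC -ee eF eqxx.
Qed.

Definition dg (T : finType) (A : rel T) (x : T) : nat := \sum_y (A x y : nat).
Definition al (T : finType) (A : rel T) : nat := \sum_x dg A x.

Lemma al_card (T : finType) (A : rel T) : al A = #|[set p : T * T | A p.1 p.2]|.
Proof. by rewrite card_sum2. Qed.

Lemma handshake n (F : {set {set 'I_n}}) : is_simple F -> al (adj F) = 2 * #|F|.
Proof. by move=> hs; rewrite al_card handshake_set. Qed.

Definition OP n (E : {set {set 'I_n}}) :=
  [set q : {set 'I_n} * {set 'I_n} |
     [&& q.1 \in E, q.2 \in E, q.1 != q.2 & [disjoint q.1 & q.2]]].

Lemma OP_card n (E : {set {set 'I_n}}) : #|OP E| = 2 * #|two_matchings E|.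
Proof.
apply: (card_fiber (f := fun q : {set 'I_n} * {set 'I_n} => [set q.1; q.2])).
  move=> [e1 e2]; rewrite !inE /= => /and4P [h1 h2 h12 hd].
  rewrite cards2 h12 eqxx /=; apply/andP; split.
    by apply/subsetP => e; rewrite !inE => /orP[]/eqP->.
  apply/forall_inP => f1 hf1; apply/forall_inP => f2 hf2; apply/implyP.
  move: hf1 hf2; rewrite !inE => /orP[]/eqP-> /orP[]/eqP->; rewrite ?eqxx // => _;
  by rewrite // disjoint_sym.
move=> M; rewrite inE => /and3P [sME /cards2P [e1 [e2 [n12 eM]]] hd].
rewrite -(card2_set (_ : (e1, e2) != (e2, e1))); last first.
  by rewrite xpair_eqE negb_and n12.
have e1M : e1 \in M by rewrite eM set21.
have e2M : e2 \in M by rewrite eM set22.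
have d12 : [disjoint e1 & e2] by move/forall_inP: hd => /(_ e1 e1M)/forall_inP/(_ e2 e2M); rewrite n12.
have d21 : [disjoint e2 & e1] by rewrite disjoint_sym.
have e1E := subsetP sME e1 e1M; have e2E := subsetP sME e2 e2M.
apply: eq_card => -[f1 f2]; rewrite !inE /=.
apply/idP/idP.
  case/andP => _ /eqP; rewrite eM => /(set2_eqP n12) [[-> ->]|[-> ->]];
  by rewrite eqxx ?orbT.
case/orP => /eqP [-> ->]; rewrite ?e1E ?e2E ?n12 ?d12 ?d21 eM ?eqxx //=.
by rewrite eq_sym n12 setUC eqxx.
Qed.

Definition T2s n (E : {set {set 'I_n}}) :=
  [set p : ('I_n * 'I_n) * ('I_n * 'I_n) |
    [&& adj E p.1.1 p.1.2, adj E p.2.1 p.2.2, p.2.1 != p.1.1, p.2.1 != p.1.2,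
        p.2.2 != p.1.1 & p.2.2 != p.1.2]].

Lemma T2s_card n (E : {set {set 'I_n}}) : is_simple E -> #|T2s E| = 4 * #|OP E|.
Proof.
move=> hs.
apply: (card_fiber (f := fun p : ('I_n * 'I_n) * ('I_n * 'I_n) =>
   ([set p.1.1; p.1.2], [set p.2.1; p.2.2]))).
  move=> [[a b] [c d]]; rewrite !inE /= !adjE.
  case/and5P => /andP[nab eab] /andP[ncd ecd] ca cb /andP[da db].
  rewrite eab ecd disj2 // andbT /=.
  apply/negP => /eqP h; have : a \in [set c; d] by rewrite -h set21.
  by rewrite !inE !(eq_sym a) (negbTE ca) (negbTE da).
move=> [e1 e2]; rewrite inE /= => /and4P [h1 h2 h12 hd].
have [a [b [nab ee1 aab]]] := edge2 hs h1.
have [c [d [ncd ee2 acd]]] := edge2 hs h2.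
have [ca cb da db] : [/\ c != a, c != b, d != a & d != b] by apply: disj2_inv; rewrite -ee1 -ee2.
rewrite (_ : 4 = #|[set (a, b); (b, a)]| * #|[set (c, d); (d, c)]|); last first.
  by rewrite !card2_set ?xpair_eqE ?negb_and ?nab ?ncd.
rewrite -cardsX.
apply: eq_card => -[[x y] [z t]]; rewrite !inE /= xpair_eqE ee1 ee2.
apply/idP/idP.
  case/andP => _ /andP[/eqP /(set2_eqP nab) h /eqP /(set2_eqP ncd) h'].
  by case: h => -[-> ->]; case: h' => -[-> ->]; rewrite !eqxx ?orbT.
case/andP => /orP[]/eqP[-> ->] /orP[]/eqP[-> ->];
  rewrite ?(adj_sym E b a) ?(adj_sym E d c) aab acd ?ca ?cb ?da ?db // ?eqxx ?andbT //=;
  try by rewrite ?(setUC [set b]) ?(setUC [set d]) ?eqxx.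
Qed.

Lemma T2s_match n (E : {set {set 'I_n}}) : is_simple E -> #|T2s E| = 8 * #|two_matchings E|.
Proof. by move=> hs; rewrite T2s_card // OP_card mulnA. Qed.

Definition cyc n (a b c d : 'I_n) : {set {set 'I_n}} :=
  [set [set a; b]; [set b; c]; [set c; d]; [set d; a]].

Definition good n (E : {set {set 'I_n}}) (a b c d : 'I_n) :=
  [&& adj E a b, adj E b c, adj E c d, adj E d a, a != c & b != d].

Lemma cyc_rot n (a b c d : 'I_n) : cyc a b c d = cyc b c d a.
Proof.
apply/setP => e; rewrite !inE.
by case: (e == [set a; b]); rewrite ?orbT //= ?orbF.
Qed.

Lemma cyc_rev n (a b c d : 'I_n) : cyc a b c d = cyc a d c b.
Proof.
apply/setP => e; rewrite !inE (setUC [set a] [set d]) (setUC [set d] [set c]).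
rewrite (setUC [set c] [set b]) (setUC [set b] [set a]).
by case: (e == [set a; b]); case: (e == [set b; c]); case: (e == [set c; d]);
  case: (e == [set d; a]).
Qed.

Lemma good_rot n (E : {set {set 'I_n}}) a b c d : good E a b c d = good E b c d a.
Proof.
rewrite /good (eq_sym c a).
by case: (adj E a b); case: (adj E b c); case: (adj E c d); case: (adj E d a);
  case: (a != c); case: (b != d).
Qed.

Lemma good_rev n (E : {set {set 'I_n}}) a b c d : good E a b c d = good E a d c b.
Proof.
rewrite /good (adj_sym E d c) (adj_sym E c b) (adj_sym E b a) (adj_sym E a d) (eq_sym d b).
by case: (adj E a b); case: (adj E b c); case: (adj E c d); case: (adj E d a);
  case: (a != c); case: (b != d).
Qed.

Lemma good_neq n (E : {set {set 'I_n}}) a b c d : good E a b c d ->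
  a != b /\ a != c /\ a != d /\ b != c /\ b != d /\ c != d.
Proof.
case/and5P => /andP[-> _] /andP[-> _] /andP[-> _] /andP[da _] /andP[-> ->].
by rewrite eq_sym da.
Qed.

Lemma pair_with (T : finType) (e : {set T}) x : #|e| = 2 -> x \in e ->
  exists t, t != x /\ e = [set x; t].
Proof.
move/eqP/cards2P => [p [q [npq ->]]]; rewrite !inE => /orP[]/eqP->.
  by exists q; rewrite eq_sym.
by exists p; rewrite setUC.
Qed.

Lemma card2_eq (T : finType) (S : {set T}) a b : #|S| = 2 -> a \in S -> b \in S ->
  a != b -> S = [set a; b].
Proof.
move=> cS aS bS nab; apply/eqP; rewrite eq_sym eqEcard cS card2_set // leqnn andbT.
by apply/subsetP => x; rewrite !inE => /orP[]/eqP->.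
Qed.

Lemma uniq_le (T : finType) (V : {set T}) (s : seq T) : uniq s -> {subset s <= V} ->
  size s <= #|V|.
Proof. by move=> us sV; rewrite -(card_uniqP us); apply: subset_leq_card; apply/subsetP. Qed.

Lemma first_deg n (E : {set {set 'I_n}}) a b c d : good E a b c d ->
  #|[set e in cyc a b c d | a \in e]| = 2.
Proof.
move=> g; have [ab [ac [ad [bc [bd cd]]]]] := good_neq g.
rewrite (_ : [set e in _ | _] = [set [set a; b]; [set d; a]]).
  rewrite card2_set //; apply/negP => /eqP h.
  have : b \in [set d; a] by rewrite -h set22.
  by rewrite !inE (negbTE bd) eq_sym (negbTE ab).
apply/setP => e; rewrite !inE.
case: (eqVneq e [set a; b]) => [->|_]; first by rewrite set21.
case: (eqVneq e [set d; a]) => [->|_]; first by rewrite set22 !orbT.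
case: (eqVneq e [set b; c]) => [->|_]; first by rewrite !inE (negbTE ab) (negbTE ac).
case: (eqVneq e [set c; d]) => [->|_]; first by rewrite !inE (negbTE ac) (negbTE ad).
by [].
Qed.

Lemma vset_cyc n (a b c d : 'I_n) : vset (cyc a b c d) = [set a; b; c; d].
Proof.
apply/setP => u; rewrite /vset; apply/bigcupP/idP.
  by move=> [e]; rewrite !inE -!orbA => /or4P[]/eqP-> ; rewrite !inE => /orP[]/eqP->;
     rewrite eqxx ?orbT.
rewrite !inE -!orbA => /or4P[]/eqP->.
- by exists [set a; b]; rewrite !inE ?eqxx.
- by exists [set b; c]; rewrite !inE ?eqxx ?orbT.
- by exists [set c; d]; rewrite !inE ?eqxx ?orbT.
- by exists [set d; a]; rewrite !inE ?eqxx ?orbT.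
Qed.

Lemma card4_set (T : finType) (a b c d : T) :
  uniq [:: a; b; c; d] -> #|[set a; b; c; d]| = 4.
Proof.
move=> u; rewrite (_ : 4 = size [:: a; b; c; d]) // -(card_uniqP u); apply: eq_card => x.
by rewrite !inE -!orbA.
Qed.

Ltac kill_eq := repeat match goal with
 | H : is_true (?x != ?y) |- context [?x == ?y] => rewrite (negbTE H)
 | H : is_true (?x != ?y) |- context [?y == ?x] => rewrite (eq_sym y x) (negbTE H)
 end.

Lemma ne_pair (T : finType) (p q r s : T) :
  (p \notin [set r; s]) || (q \notin [set r; s]) -> [set p; q] != [set r; s].
Proof.
case/orP => h; apply/negP => /eqP e; move: h; by rewrite -e ?set21 ?set22.
Qed.

Lemma cyc_in n (E : {set {set 'I_n}}) a b c d : good E a b c d ->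
  cyc a b c d \in four_cycles E.
Proof.
move=> g; have [ab [ac [ad [bc [bd cd]]]]] := good_neq g.
case/and5P: (g) => /andP[_ eab] /andP[_ ebc] /andP[_ ecd] /andP[_ eda] _.
have n1 : [set a; b] != [set b; c] by apply: ne_pair; rewrite !inE; kill_eq.
have n2 : [set a; b] != [set c; d] by apply: ne_pair; rewrite !inE; kill_eq.
have n3 : [set a; b] != [set d; a] by apply: ne_pair; rewrite !inE; kill_eq; rewrite orbT.
have n4 : [set b; c] != [set c; d] by apply: ne_pair; rewrite !inE; kill_eq.
have n5 : [set b; c] != [set d; a] by apply: ne_pair; rewrite !inE; kill_eq.
have n6 : [set c; d] != [set d; a] by apply: ne_pair; rewrite !inE; kill_eq.
rewrite inE; apply/and4P; split.
- by apply/subsetP => e; rewrite !inE -!orbA => /or4P[]/eqP->.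
- by rewrite card4_set //= !inE !negb_or n1 n2 n3 n4 n5 n6.
- by rewrite (vset_cyc a b c d) card4_set //= !inE; kill_eq.
apply/forall_inP => u; rewrite (vset_cyc a b c d) !inE -!orbA => /or4P[]/eqP->; apply/eqP.
- exact: (first_deg g).
- by rewrite cyc_rot; apply: (@first_deg _ E); rewrite -good_rot.
- by rewrite cyc_rot cyc_rot; apply: (@first_deg _ E); rewrite -good_rot -good_rot.
- by rewrite cyc_rot cyc_rot cyc_rot; apply: (@first_deg _ E); rewrite -good_rot -good_rot -good_rot.
Qed.


Lemma cyc_struct n (E : {set {set 'I_n}}) C : is_simple E -> C \in four_cycles E ->
  exists a b c d, good E a b c d /\ C = cyc a b c d.
Proof.
move=> hs; rewrite inE => /and4P [sCE /eqP cC /eqP cV /forall_inP hdeg].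
have hsC : forall e, e \in C -> #|e| = 2.
  by move=> e h; apply/eqP; move/forall_inP: hs; apply; apply: (subsetP sCE).
have inV : forall u e, e \in C -> u \in e -> u \in vset C.
  by move=> u e he hu; apply/bigcupP; exists e.
have hdeg2 : forall u, u \in vset C -> #|[set e in C | u \in e]| = 2.
  by move=> u hu; apply/eqP; apply: hdeg.
have : C != set0 by rewrite -card_gt0 cC.
case/set0Pn => e1 e1C.
have /cards2P [x [y [nxy ee1]]] : #|e1| == 2 by rewrite hsC.
have xV : x \in vset C by apply: (inV _ e1); rewrite // ee1 set21.
have yV : y \in vset C by apply: (inV _ e1); rewrite // ee1 set22.
have e1Sx : e1 \in [set e in C | x \in e] by rewrite inE e1C ee1 set21.
have [e2 [n21 Sx]] := pair_with (hdeg2 x xV) e1Sx.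
have : e2 \in [set e in C | x \in e] by rewrite Sx set22.
rewrite inE => /andP [e2C xe2].
have [t [ntx ee2]] := pair_with (hsC e2 e2C) xe2.
have nty : t != y.
  by apply/negP => /eqP ety; move: n21; rewrite ee2 ee1 ety eqxx.
have e1Sy : e1 \in [set e in C | y \in e] by rewrite inE e1C ee1 set22.
have [e3 [n31 Sy]] := pair_with (hdeg2 y yV) e1Sy.
have : e3 \in [set e in C | y \in e] by rewrite Sy set22.
rewrite inE => /andP [e3C ye3].
have [z [nzy ee3]] := pair_with (hsC e3 e3C) ye3.
have nzx : z != x.
  by apply/negP => /eqP ezx; move: n31; rewrite ee3 ee1 ezx setUC eqxx.
have inSx : forall e, e \in C -> x \in e -> e = e1 \/ e = e2.
  move=> e eC xe; have : e \in [set e in C | x \in e] by rewrite inE eC xe.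
  by rewrite Sx => /set2P.
have inSy : forall e, e \in C -> y \in e -> e = e1 \/ e = e3.
  move=> e eC ye; have : e \in [set e in C | y \in e] by rewrite inE eC ye.
  by rewrite Sy => /set2P.
have n23 : e2 != e3.
  apply/negP => /eqP e23; have : x \in e3 by rewrite -e23.
  by rewrite ee3 !inE; kill_eq.
have : ~~ (C \subset [:: e1; e2; e3]).
  apply/negP => s; have := leq_trans (subset_leq_card s) (card_size _).
  by rewrite cC.
case/subsetPn => e4 e4C; rewrite !inE !negb_or => /and3P [n41 n42 n43].
have /cards2P [p [q [npq ee4]]] : #|e4| == 2 by rewrite hsC.
have pV : p \in vset C by apply: (inV _ e4); rewrite // ee4 set21.
have qV : q \in vset C by apply: (inV _ e4); rewrite // ee4 set22.
have xe4 : x \notin e4.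
  by apply/negP => h; case: (inSx _ e4C h) => e; move: n41 n42; rewrite e eqxx.
have ye4 : y \notin e4.
  by apply/negP => h; case: (inSy _ e4C h) => e; move: n41 n43; rewrite e eqxx.
have [px qx] : p != x /\ q != x.
  by move: xe4; rewrite ee4 !inE negb_or => /andP[]; rewrite !(eq_sym x).
have [py qy] : p != y /\ q != y.
  by move: ye4; rewrite ee4 !inE negb_or => /andP[]; rewrite !(eq_sym y).
have tV : t \in vset C by apply: (inV _ e2); rewrite // ee2 set22.
have zV : z \in vset C by apply: (inV _ e3); rewrite // ee3 set22.
case: (eqVneq z t) => [ezt | nzt].
  have St : [set e in C | t \in e] = [set e2; e3].
    apply: card2_eq; rewrite ?hdeg2 // !inE ?e2C ?e3C ?ee2 ?ee3 ?ezt ?set22 //.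
  have te4 : t \notin e4.
    apply/negP => h; have : e4 \in [set e in C | t \in e] by rewrite inE e4C h.
    by rewrite St !inE; kill_eq.
  have [pt qt] : p != t /\ q != t.
    by move: te4; rewrite ee4 !inE negb_or => /andP[]; rewrite !(eq_sym t).
  have : size [:: x; y; t; p; q] <= #|vset C|.
    apply: uniq_le; first by rewrite /= !inE; kill_eq.
    by apply/allP; rewrite /= xV yV tV pV qV.
  by rewrite cV.
have pzt : (p == z) || (p == t).
  apply/negPn/negP; rewrite negb_or => /andP [pz pt].
  have : size [:: x; y; z; t; p] <= #|vset C|.
    apply: uniq_le; first by rewrite /= !inE; kill_eq.
    by apply/allP; rewrite /= xV yV zV tV pV.
  by rewrite cV.
have qzt : (q == z) || (q == t).
  apply/negPn/negP; rewrite negb_or => /andP [qz qt].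
  have : size [:: x; y; z; t; q] <= #|vset C|.
    apply: uniq_le; first by rewrite /= !inE; kill_eq.
    by apply/allP; rewrite /= xV yV zV tV qV.
  by rewrite cV.
have ee4' : e4 = [set z; t].
  rewrite ee4; move: pzt qzt npq => /orP[]/eqP-> /orP[]/eqP->; rewrite ?eqxx //.
  by rewrite setUC.
have g : good E x y z t.
  rewrite /good !adjE nxy eq_sym nzy nzt ntx eq_sym nzx eq_sym nty /=.
  rewrite -ee1 -ee3 -ee4' (setUC [set t]) -ee2.
  by rewrite !(subsetP sCE).
exists x, y, z, t; split => //.
apply/eqP; rewrite eq_sym eqEcard.
have := cyc_in g; rewrite inE => /and4P [_ /eqP -> _ _].
by rewrite cC leqnn andbT; apply/subsetP => e; rewrite !inE -!orbA => /or4P[]/eqP->;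
  rewrite -?ee1 -?ee3 -?ee4' // setUC -ee2.
Qed.


Lemma pair_mem (T : finType) (p q r s : T) : [set p; q] = [set r; s] ->
  p \in [set r; s] /\ q \in [set r; s].
Proof. by move=> <-; rewrite set21 set22. Qed.

Lemma cyc_det n (E : {set {set 'I_n}}) a b c d c' d' :
  good E a b c d -> good E a b c' d' -> cyc a b c d = cyc a b c' d' -> c = c' /\ d = d'.
Proof.
move=> g g' e.
have [ab [ac [ad [bc [bd cd]]]]] := good_neq g.
have [_ [ac' [ad' [bc' [bd' cd']]]]] := good_neq g'.
have h1 : [set b; c'] \in cyc a b c d by rewrite e !inE eqxx orbT.
have h2 : [set d'; a] \in cyc a b c d by rewrite e !inE eqxx !orbT.
split.
  move: h1; rewrite !inE -!orbA => /or4P[]/eqP/pair_mem[]; rewrite !inE; kill_eq => //.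
  by rewrite orbF => _ /eqP.
move: h2; rewrite !inE -!orbA => /or4P[]/eqP/pair_mem[]; rewrite !inE; kill_eq => //.
by rewrite orbF => /eqP.
Qed.

Lemma dihedral1 n (E : {set {set 'I_n}}) x y z t a b : good E x y z t ->
  [set a; b] = [set x; y] -> exists c d, good E a b c d /\ cyc a b c d = cyc x y z t.
Proof.
move=> g; have [xy _] := good_neq g.
case/(set2_eqP xy) => -[-> ->]; first by exists z, t.
exists t, z; split.
  by rewrite good_rev -good_rot.
by rewrite -cyc_rev -cyc_rot.
Qed.

Lemma dihedral n (E : {set {set 'I_n}}) x y z t a b : good E x y z t ->
  [set a; b] \in cyc x y z t -> exists c d, good E a b c d /\ cyc a b c d = cyc x y z t.
Proof.
move=> g; rewrite !inE -!orbA => /or4P[]/eqP h.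
- exact: dihedral1 g h.
- have g' : good E y z t x by rewrite -good_rot.
  by have [c [d [gc ec]]] := dihedral1 g' h; exists c, d; rewrite ec -cyc_rot.
- have g' : good E z t x y by rewrite -good_rot -good_rot.
  by have [c [d [gc ec]]] := dihedral1 g' h; exists c, d; rewrite ec -cyc_rot -cyc_rot.
- have g' : good E t x y z by rewrite -good_rot -good_rot -good_rot.
  by have [c [d [gc ec]]] := dihedral1 g' h; exists c, d;
    rewrite ec -cyc_rot -cyc_rot -cyc_rot.
Qed.

Definition T4s n (E : {set {set 'I_n}}) :=
  [set p : 'I_n * 'I_n * 'I_n * 'I_n | good E p.1.1.1 p.1.1.2 p.1.2 p.2].

Definition cyc4 n (p : 'I_n * 'I_n * 'I_n * 'I_n) := cyc p.1.1.1 p.1.1.2 p.1.2 p.2.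

Lemma fiber4 n (E : {set {set 'I_n}}) C : is_simple E -> C \in four_cycles E ->
  #|[set p in T4s E | cyc4 p == C]| = 8.
Proof.
move=> hs hC.
have [x [y [z [t [g eC]]]]] := cyc_struct hs hC.
have hC' := hC; rewrite inE in hC'; case/and4P: hC' => sCE /eqP cC _ _.
set F := [set p in T4s E | cyc4 p == C].
pose proj (p : 'I_n * 'I_n * 'I_n * 'I_n) := (p.1.1.1, p.1.1.2).
have inj : {in F &, injective proj}.
  move=> [[[a b] c] d] [[[a' b'] c'] d']; rewrite !inE /cyc4 /proj /=.
  move=> /andP [g1 /eqP e1] /andP [g2 /eqP e2] [ea eb]; subst a' b'.
  by have [-> ->] := cyc_det g1 g2 (etrans e1 (esym e2)).
rewrite -(card_in_imset inj).
have hsC : is_simple C.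
  apply/forall_inP => e eC0; move/forall_inP: hs; apply; exact: (subsetP sCE).
rewrite (_ : [set proj p | p in F] = [set q : 'I_n * 'I_n | adj C q.1 q.2]).
  by rewrite handshake_set // cC.
apply/setP => -[a b]; rewrite inE /=; apply/imsetP/idP.
  move=> [[[[a' b'] c] d]]; rewrite !inE /cyc4 /proj /= => /andP [g1 /eqP e1] [-> ->].
  have [ab _] := good_neq g1.
  by rewrite adjE ab -e1 !inE eqxx.
rewrite adjE => /andP [ab]; rewrite eC => /(dihedral g) [c [d [gc ec]]].
exists (a, b, c, d) => //.
by rewrite !inE /cyc4 /= gc ec eC eqxx.
Qed.

Lemma T4s_card n (E : {set {set 'I_n}}) : is_simple E -> #|T4s E| = 8 * #|four_cycles E|.
Proof.
move=> hs; apply: (card_fiber (f := @cyc4 n)) => [p|C hC].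
  by rewrite inE => g; apply: cyc_in.
exact: fiber4.
Qed.


Definition DD (T : finType) (A : rel T) := \sum_x (dg A x) ^ 2.
Definition cc (T : finType) (A : rel T) x z := \sum_y (A x y && A y z : nat).
Definition WW (T : finType) (A : rel T) := \sum_x \sum_z (cc A x z) ^ 2.
Definition TT2 (T : finType) (A : rel T) := \sum_x \sum_y \sum_z \sum_t
  ([&& A x y, A z t, z != x, z != y, t != x & t != y] : nat).
Definition TT4 (T : finType) (A : rel T) := \sum_x \sum_y \sum_z \sum_t
  ([&& A x y, A y z, A z t, A t x, x != z & y != t] : nat).

Lemma sum_pick (T : finType) (x : T) (F : T -> nat) : \sum_z ((z == x) * F z) = F x.
Proof.
rewrite (bigD1 x) //= eqxx mul1n big1 ?addn0 // => z /negbTE ->; by rewrite mul0n.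
Qed.

Lemma dg_l (T : finType) (A : rel T) x :
  \sum_z \sum_t (A z t && (z == x) : nat) = dg A x.
Proof.
rewrite -(sum_pick x (dg A)); apply: eq_bigr => z _; rewrite big_distrr /=.
by apply: eq_bigr => t _; rewrite mulnb andbC.
Qed.

Lemma dg_r (T : finType) (A : rel T) x : symmetric A ->
  \sum_z \sum_t (A z t && (t == x) : nat) = dg A x.
Proof.
move=> sA; rewrite exchange_big /= -(sum_pick x (dg A)); apply: eq_bigr => t _.
rewrite big_distrr /=; apply: eq_bigr => z _; by rewrite mulnb andbC sA.
Qed.

Lemma one_pair (T : finType) (x y : T) : \sum_z \sum_t ((z == x) && (t == y) : nat) = 1.
Proof.
transitivity (\sum_z ((z == x) * 1)); last by rewrite sum_pick.
apply: eq_bigr => z _; rewrite muln1 -(sum_pick y (fun _ => nat_of_bool (z == x))).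
by apply: eq_bigr => t _; rewrite mulnb andbC.
Qed.

Lemma T2_point (T : finType) (A : rel T) x y z t : symmetric A -> irreflexive A -> A x y ->
  ([&& A z t, z != x, z != y, t != x & t != y] : nat) + (A z t && (z == x))
   + (A z t && (t == x)) + (A z t && (z == y)) + (A z t && (t == y))
  = A z t + ((z == x) && (t == y)) + ((z == y) && (t == x)).
Proof.
move=> sA iA axy.
have xy : x != y by apply/eqP => e; subst; rewrite iA in axy.
have ayx : A y x by rewrite sA.
have h1 : (z == x) && (t == y) ==> A z t by apply/implyP => /andP[/eqP-> /eqP->].
have h2 : (z == y) && (t == x) ==> A z t by apply/implyP => /andP[/eqP-> /eqP->].
have h3 : ~~ ((z == x) && (z == y)) by apply/negP => /andP[/eqP-> /eqP e]; rewrite e eqxx in xy.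
have h4 : ~~ ((t == x) && (t == y)) by apply/negP => /andP[/eqP-> /eqP e]; rewrite e eqxx in xy.
have h5 : A z t ==> ~~ ((z == x) && (t == x)).
  by apply/implyP => h; apply/negP => /andP[/eqP e1 /eqP e2]; subst; rewrite iA in h.
have h6 : A z t ==> ~~ ((z == y) && (t == y)).
  by apply/implyP => h; apply/negP => /andP[/eqP e1 /eqP e2]; subst; rewrite iA in h.
move: h1 h2 h3 h4 h5 h6; rewrite -!(eq_sym x) -!(eq_sym y).
by case: (x == z); case: (y == z); case: (x == t); case: (y == t); case: (A z t).
Qed.

Lemma sum2_split (T : finType) (f g : T -> T -> nat) :
  \sum_z \sum_t (f z t + g z t) = \sum_z \sum_t f z t + \sum_z \sum_t g z t.
Proof. by rewrite -big_split; apply: eq_bigr => z _; rewrite big_split. Qed.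

Lemma dg_sym (T : finType) (A : rel T) y : symmetric A -> \sum_x (A x y : nat) = dg A y.
Proof. by move=> sA; apply: eq_bigr => x _; rewrite sA. Qed.

Lemma DD_l (T : finType) (A : rel T) : \sum_x \sum_y ((A x y : nat) * dg A x) = DD A.
Proof. by apply: eq_bigr => x _; rewrite -big_distrl. Qed.

Lemma DD_r (T : finType) (A : rel T) : symmetric A ->
  \sum_x \sum_y ((A x y : nat) * dg A y) = DD A.
Proof.
move=> sA; rewrite exchange_big; apply: eq_bigr => y _; rewrite -big_distrl /=.
by rewrite dg_sym.
Qed.

Lemma sum2_mul (T : finType) c (f : T -> T -> nat) :
  \sum_z \sum_t (c * f z t) = c * \sum_z \sum_t f z t.
Proof. by rewrite big_distrr; apply: eq_bigr => z _; rewrite big_distrr. Qed.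

Lemma T2_formula (T : finType) (A : rel T) : symmetric A -> irreflexive A ->
  TT2 A + 4 * DD A = al A ^ 2 + 2 * al A.
Proof.
move=> sA iA.
have inner : forall x y, \sum_z \sum_t ([&& A x y, A z t, z != x, z != y, t != x & t != y] : nat)
   + (A x y : nat) * (2 * dg A x + 2 * dg A y) = (A x y : nat) * (al A + 2).
  move=> x y; case axy : (A x y); last first.
    by rewrite !mul0n addn0; apply: big1 => z _; apply: big1.
  rewrite !mul1n.
  have key : \sum_z \sum_t (([&& A z t, z != x, z != y, t != x & t != y] : nat)
     + (A z t && (z == x)) + (A z t && (t == x)) + (A z t && (z == y)) + (A z t && (t == y)))
   = \sum_z \sum_t ((A z t : nat) + ((z == x) && (t == y)) + ((z == y) && (t == x))).
    by apply: eq_bigr => z _; apply: eq_bigr => t _; apply: T2_point.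
  rewrite !sum2_split dg_l (dg_r _ sA) dg_l (dg_r _ sA) !one_pair in key.
  rewrite /al; move: key; rewrite /dg /=; lia.
have H : \sum_x \sum_y (\sum_z \sum_t ([&& A x y, A z t, z != x, z != y, t != x & t != y] : nat)
   + (A x y : nat) * (2 * dg A x + 2 * dg A y)) = \sum_x \sum_y ((A x y : nat) * (al A + 2)).
  by apply: eq_bigr => x _; apply: eq_bigr => y _; exact: inner.
have H2 : \sum_x \sum_y ((A x y : nat) * (2 * dg A x + 2 * dg A y)) = 2 * DD A + 2 * DD A.
  rewrite -{1}(DD_l A) -(DD_r sA) -!sum2_mul -sum2_split.
  by apply: eq_bigr => x _; apply: eq_bigr => y _; rewrite mulnDr !mulnA (mulnC 2).
have H3 : \sum_x \sum_y ((A x y : nat) * (al A + 2)) = al A * (al A + 2).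
  by rewrite /al /dg big_distrl /=; apply: eq_bigr => x _; rewrite big_distrl.
rewrite sum2_split H2 H3 in H.
rewrite /TT2; lia.
Qed.

Lemma sum4_split (T : finType) (f g : T -> T -> T -> T -> nat) :
  \sum_x \sum_y \sum_z \sum_t (f x y z t + g x y z t) =
  \sum_x \sum_y \sum_z \sum_t f x y z t + \sum_x \sum_y \sum_z \sum_t g x y z t.
Proof.
rewrite -big_split; apply: eq_bigr => x _; rewrite -big_split; apply: eq_bigr => y _.
by rewrite sum2_split.
Qed.

Lemma WW_expand (T : finType) (A : rel T) :
  WW A = \sum_x \sum_y \sum_z \sum_t ((A x y && A y z : nat) * (A x t && A t z : nat)).
Proof.
rewrite /WW; apply: eq_bigr => x _.
rewrite exchange_big /=; apply: eq_bigr => z _.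
by rewrite -mulnn /cc big_distrl /=; apply: eq_bigr => y _; rewrite big_distrr.
Qed.

Lemma S1_inner (T : finType) (A : rel T) x y : symmetric A ->
  \sum_z \sum_t ([&& A x y, A y z, A z t, A t x & z == x] : nat) = (A x y : nat) * dg A x.
Proof.
move=> sA; rewrite -(sum_pick x (fun z => (A x y : nat) * dg A x)).
apply: eq_bigr => z _; case: (eqVneq z x) => [->|ne].
  rewrite ?eqxx mul1n /dg big_distrr /=; apply: eq_bigr => t _.
  by rewrite (sA y x) (sA t x); case: (A x y); case: (A x t).
by rewrite mul0n; apply: big1 => t _; rewrite ?(negbTE ne) !andbF.
Qed.

Lemma S2_inner (T : finType) (A : rel T) x y z : symmetric A ->
  \sum_t ([&& A x y, A y z, A z t, A t x & t == y] : nat) = (A y x && A y z : nat).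
Proof.
move=> sA; rewrite -(sum_pick y (fun _ => (A y x && A y z : nat))).
apply: eq_bigr => t _; case: (eqVneq t y) => [->|ne].
  by rewrite ?eqxx mul1n (sA x y) (sA z y); case: (A y x); case: (A y z).
by rewrite ?(negbTE ne) !andbF.
Qed.

Lemma S3_inner (T : finType) (A : rel T) x y : symmetric A ->
  \sum_z \sum_t ([&& A x y, A y z, A z t, A t x, z == x & t == y] : nat) = A x y.
Proof.
move=> sA; rewrite -(sum_pick x (fun _ => (A x y : nat))).
apply: eq_bigr => z _; case: (eqVneq z x) => [->|ne]; last first.
  by rewrite mul0n; apply: big1 => t _; rewrite ?(negbTE ne) !andbF.
rewrite mul1n -(sum_pick y (fun _ => (A x y : nat))).
apply: eq_bigr => t _; case: (eqVneq t y) => [->|ne].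
  by rewrite ?eqxx (sA y x); case: (A x y).
by rewrite ?(negbTE ne) !andbF.
Qed.

Lemma T4_formula (T : finType) (A : rel T) : symmetric A -> irreflexive A ->
  TT4 A + 2 * DD A = WW A + al A.
Proof.
move=> sA iA.
have key : \sum_x \sum_y \sum_z \sum_t (([&& A x y, A y z, A z t, A t x, x != z & y != t] : nat)
   + ([&& A x y, A y z, A z t, A t x & z == x] : nat)
   + ([&& A x y, A y z, A z t, A t x & t == y] : nat))
  = \sum_x \sum_y \sum_z \sum_t ((A x y && A y z : nat) * (A x t && A t z : nat)
   + ([&& A x y, A y z, A z t, A t x, z == x & t == y] : nat)).
  apply: eq_bigr => x _; apply: eq_bigr => y _; apply: eq_bigr => z _; apply: eq_bigr => t _.
  rewrite (sA x t) (sA t z) (eq_sym x z) (eq_sym y t).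
  by case: (A x y); case: (A y z); case: (A z t); case: (A t x); case: (z == x); case: (t == y).
rewrite !sum4_split -WW_expand in key.
have e1 : \sum_x \sum_y \sum_z \sum_t ([&& A x y, A y z, A z t, A t x & z == x] : nat) = DD A.
  by rewrite -(DD_l A); apply: eq_bigr => x _; apply: eq_bigr => y _; rewrite S1_inner.
have e2 : \sum_x \sum_y \sum_z \sum_t ([&& A x y, A y z, A z t, A t x & t == y] : nat) = DD A.
  rewrite (eq_bigr (fun x => \sum_y \sum_z (A y x && A y z : nat))); last first.
    by move=> x _; apply: eq_bigr => y _; apply: eq_bigr => z _; rewrite S2_inner.
  rewrite exchange_big; apply: eq_bigr => y _.
  rewrite -mulnn /dg big_distrl /=; apply: eq_bigr => x _; rewrite big_distrr /=.
  by apply: eq_bigr => z _; rewrite mulnb.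
have e3 : \sum_x \sum_y \sum_z \sum_t ([&& A x y, A y z, A z t, A t x, z == x & t == y] : nat) = al A.
  by apply: eq_bigr => x _; apply: eq_bigr => y _; rewrite S3_inner.
rewrite e1 e2 e3 in key.
rewrite /TT4; lia.
Qed.

Lemma T4_le_T2 (T : finType) (A : rel T) : irreflexive A -> TT4 A <= TT2 A.
Proof.
move=> iA; apply: leq_sum => x _; apply: leq_sum => y _; apply: leq_sum => z _.
apply: leq_sum => t _.
case h : [&& A x y, A y z, A z t, A t x, x != z & y != t] => //.
case/and5P: h => axy ayz azt atx /andP [xz yt].
have nzy : z != y by apply/eqP => e; subst; rewrite iA in ayz.
have ntx : t != x by apply/eqP => e; subst; rewrite iA in atx.
by rewrite axy azt eq_sym xz nzy ntx eq_sym yt.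
Qed.

Definition rm (T : finType) (A : rel T) (u : T) : rel T :=
  fun x y => [&& A x y, x != u & y != u].

Lemma rm_sym (T : finType) (A : rel T) u : symmetric A -> symmetric (rm A u).
Proof. by move=> sA x y; rewrite /rm (sA x y); case: (A y x); case: (x != u); case: (y != u). Qed.

Lemma rm_irr (T : finType) (A : rel T) u : irreflexive A -> irreflexive (rm A u).
Proof. by move=> iA x; rewrite /rm iA. Qed.

Lemma al_rm (T : finType) (A : rel T) u : symmetric A -> irreflexive A ->
  al A = al (rm A u) + 2 * dg A u.
Proof.
move=> sA iA.
have key : \sum_x \sum_y (A x y : nat) = \sum_x \sum_y ((rm A u x y : nat)
   + (A x y && (x == u)) + (A x y && (y == u))).
  apply: eq_bigr => x _; apply: eq_bigr => y _; rewrite /rm.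
  case: (eqVneq x u) => [->|xu]; case: (eqVneq y u) => [->|yu]; rewrite ?iA //=;
  by case: (A _ _).
rewrite !sum2_split dg_l (dg_r _ sA) in key.
rewrite /al /dg; move: key; rewrite /dg; lia.
Qed.

Definition W4 (T : finType) (A : rel T) := \sum_x \sum_y \sum_z \sum_t
  ([&& A x y, A y z, A z t & A t x] : nat).

Lemma WW_W4 (T : finType) (A : rel T) : symmetric A -> WW A = W4 A.
Proof.
move=> sA; rewrite WW_expand; apply: eq_bigr => x _; apply: eq_bigr => y _.
apply: eq_bigr => z _; apply: eq_bigr => t _.
by rewrite mulnb (sA x t) (sA t z); case: (A x y); case: (A y z); case: (A z t); case: (A t x).
Qed.

Lemma rot4 (T : finType) (F : T -> T -> T -> T -> nat) :
  \sum_x \sum_y \sum_z \sum_t F x y z t = \sum_x \sum_y \sum_z \sum_t F y z t x.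
Proof.
rewrite [RHS]exchange_big /=; apply: eq_bigr => y _.
rewrite [RHS]exchange_big /=; apply: eq_bigr => z _.
by rewrite [RHS]exchange_big /=.
Qed.

Lemma Sx_val (T : finType) (A : rel T) u : symmetric A ->
  \sum_x \sum_y \sum_z \sum_t ([&& A x y, A y z, A z t, A t x & x == u] : nat)
  = \sum_z (cc A u z) ^ 2.
Proof.
move=> sA; rewrite -(sum_pick u (fun _ => \sum_z (cc A u z) ^ 2)).
apply: eq_bigr => x _; case: (eqVneq x u) => [->|ne]; last first.
  by rewrite mul0n; apply: big1 => y _; apply: big1 => z _; apply: big1 => t _;
     rewrite !andbF.
rewrite mul1n exchange_big /=; apply: eq_bigr => z _.
rewrite -mulnn {2}/cc big_distrl /=; apply: eq_bigr => y _.
rewrite /cc big_distrr /=; apply: eq_bigr => t _.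
rewrite mulnb (sA u t) (sA t z) andbT.
by case: (A u y); case: (A y z); case: (A z t); case: (A t u).
Qed.

Lemma Sxz_val (T : finType) (A : rel T) u : symmetric A ->
  \sum_x \sum_y \sum_z \sum_t ([&& A x y, A y z, A z t, A t x, x == u & z == u] : nat)
  = (dg A u) ^ 2.
Proof.
move=> sA; rewrite -(sum_pick u (fun _ => (dg A u) ^ 2)).
apply: eq_bigr => x _; case: (eqVneq x u) => [->|ne]; last first.
  by rewrite mul0n; apply: big1 => y _; apply: big1 => z _; apply: big1 => t _;
     rewrite !andbF.
rewrite mul1n -mulnn {2}/dg big_distrl /=; apply: eq_bigr => y _.
rewrite -(sum_pick u (fun _ => (A u y : nat) * dg A u)).
apply: eq_bigr => z _; case: (eqVneq z u) => [->|nz]; last first.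
  by rewrite mul0n; apply: big1 => t _; rewrite !andbF.
rewrite mul1n /dg big_distrr /=; apply: eq_bigr => t _.
rewrite mulnb (sA y u) (sA t u) andbT.
by case: (A u y); case: (A u t).
Qed.

Lemma W4_rm (T : finType) (A : rel T) u : symmetric A -> irreflexive A ->
  W4 A + 2 * (dg A u) ^ 2 = W4 (rm A u) + 4 * \sum_z (cc A u z) ^ 2.
Proof.
move=> sA iA.
pose w x y z t := [&& A x y, A y z, A z t & A t x].
have key : \sum_x \sum_y \sum_z \sum_t (([&& A x y, A y z, A z t & A t x] : nat)
     + ([&& A x y, A y z, A z t, A t x, x == u & z == u] : nat)
     + ([&& A y z, A z t, A t x, A x y, y == u & t == u] : nat))
  = \sum_x \sum_y \sum_z \sum_t (([&& rm A u x y, rm A u y z, rm A u z t & rm A u t x] : nat)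
     + ([&& A x y, A y z, A z t, A t x & x == u] : nat)
     + ([&& A y z, A z t, A t x, A x y & y == u] : nat)
     + ([&& A z t, A t x, A x y, A y z & z == u] : nat)
     + ([&& A t x, A x y, A y z, A z t & t == u] : nat)).
  apply: eq_bigr => x _; apply: eq_bigr => y _; apply: eq_bigr => z _; apply: eq_bigr => t _.
  rewrite /rm.
  case: (eqVneq x u) => [->|xu]; case: (eqVneq y u) => [->|yu];
  case: (eqVneq z u) => [->|zu]; case: (eqVneq t u) => [->|tu];
  rewrite ?iA ?andbF ?andbT //=;
  by case: (A _ _); case: (A _ _); case: (A _ _); case: (A _ _).
rewrite !sum4_split in key.
have eyt : \sum_x \sum_y \sum_z \sum_t ([&& A y z, A z t, A t x, A x y, y == u & t == u] : nat)
   = (dg A u) ^ 2 by rewrite -(Sxz_val u sA) [RHS]rot4.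
have ey : \sum_x \sum_y \sum_z \sum_t ([&& A y z, A z t, A t x, A x y & y == u] : nat)
   = \sum_z (cc A u z) ^ 2 by rewrite -(Sx_val u sA) [RHS]rot4.
have ez : \sum_x \sum_y \sum_z \sum_t ([&& A z t, A t x, A x y, A y z & z == u] : nat)
   = \sum_z (cc A u z) ^ 2 by rewrite -(Sx_val u sA) [RHS]rot4 [RHS]rot4.
have et : \sum_x \sum_y \sum_z \sum_t ([&& A t x, A x y, A y z, A z t & t == u] : nat)
   = \sum_z (cc A u z) ^ 2 by rewrite -(Sx_val u sA) [RHS]rot4 [RHS]rot4 [RHS]rot4.
rewrite (Sxz_val u sA) (Sx_val u sA) eyt ey ez et in key.
rewrite /W4; move: key; rewrite /rm; lia.
Qed.

Lemma cc_diag (T : finType) (A : rel T) x : symmetric A -> cc A x x = dg A x.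
Proof. by move=> sA; apply: eq_bigr => y _; rewrite (sA y x) andbb. Qed.

Lemma dg_rm (T : finType) (A : rel T) u x : x != u -> A x u = false ->
  dg (rm A u) x = dg A x.
Proof.
move=> xu axu; apply: eq_bigr => y _; rewrite /rm xu /=.
by case: (eqVneq y u) => [->|yu]; rewrite ?axu ?andbT ?andbF.
Qed.


Lemma F2 (T : finType) (A : rel T) v w : symmetric A -> irreflexive A -> v != w ->
  (forall y, A v y = (y != v) && (y != w)) ->
  \sum_z (cc A v z) ^ 2 = (dg A v) ^ 2 + (dg A w) ^ 2 + DD (rm (rm A v) w).
Proof.
move=> sA iA vw hv.
have avw : A v w = false by rewrite hv eqxx andbF.
have key : forall z, (cc A v z) ^ 2 = (z == v) * (dg A v) ^ 2 + (z == w) * (dg A w) ^ 2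
    + (dg (rm (rm A v) w) z) ^ 2.
  move=> z; case: (eqVneq z v) => [->|zv].
    rewrite cc_diag // (negbTE vw) mul1n mul0n addn0.
    suff -> : dg (rm (rm A v) w) v = 0 by rewrite addn0.
    by apply: big1 => y _; rewrite /rm eqxx /= andbF.
  case: (eqVneq z w) => [->|zw].
    rewrite mul0n mul1n add0n.
    suff [-> ->] : cc A v w = dg A w /\ dg (rm (rm A v) w) w = 0 by rewrite addn0.
    split; last by apply: big1 => y _; rewrite /rm eqxx /= !andbF.
    apply: eq_bigr => y _; rewrite hv (sA y w).
    case: (eqVneq y v) => [->|yv]; first by rewrite (sA w v) avw.
    by case: (eqVneq y w) => [->|yw]; rewrite ?iA.
  rewrite !mul0n !add0n; congr (_ ^ 2); apply: eq_bigr => y _.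
  by rewrite /rm hv zv zw (sA y z) /=; case: (A z y); case: (y != v); case: (y != w).
rewrite (eq_bigr _ (fun z _ => key z)) !big_split /= !sum_pick.
by [].
Qed.

Lemma dgA1w (T : finType) (A : rel T) v w : symmetric A -> v != w -> A v w = false ->
  dg (rm A v) w = dg A w.
Proof. by move=> sA vw avw; apply: dg_rm; rewrite ?(eq_sym w) // sA. Qed.

Definition Ep (T : finType) (A : rel T) v w :=
  \sum_z ((z != w) * (cc (rm A v) w z) ^ 2).

Lemma F4 (T : finType) (A : rel T) v w : symmetric A -> v != w -> A v w = false ->
  \sum_z (cc (rm A v) w z) ^ 2 = (dg A w) ^ 2 + Ep A v w.
Proof.
move=> sA vw avw.
rewrite -(dgA1w sA vw avw) -(cc_diag _ (rm_sym v sA)) -(sum_pick w (fun z => (cc (rm A v) w z) ^ 2)).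
rewrite /Ep -big_split /=; apply: eq_bigr => z _.
by case: (eqVneq z w) => [->|zw]; rewrite ?mul1n ?mul0n ?addn0.
Qed.

Lemma decomp (T : finType) (A : rel T) v w : symmetric A -> irreflexive A -> v != w ->
  (forall y, A v y = (y != v) && (y != w)) ->
  WW A = WW (rm (rm A v) w) + 2 * (dg A v) ^ 2 + 6 * (dg A w) ^ 2
         + 4 * DD (rm (rm A v) w) + 4 * Ep A v w
  /\ al A = al (rm (rm A v) w) + 2 * dg A v + 2 * dg A w.
Proof.
move=> sA iA vw hv.
have avw : A v w = false by rewrite hv eqxx andbF.
have s1 := rm_sym v sA; have i1 := rm_irr v iA.
have s2 := rm_sym w s1; have i2 := rm_irr w i1.
have h1 := W4_rm v sA iA; have h2 := W4_rm w s1 i1.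
rewrite -!WW_W4 // in h1 h2.
rewrite (F2 sA iA vw hv) in h1.
rewrite (F4 sA vw avw) (dgA1w sA vw avw) in h2.
have a1 := al_rm v sA iA; have a2 := al_rm w s1 i1.
rewrite (dgA1w sA vw avw) in a2.
split; lia.
Qed.

Lemma cc_le (T : finType) (A : rel T) x z : cc A x z <= dg A x.
Proof. by apply: leq_sum => y _; case: (A x y); case: (A y z). Qed.

Lemma dg2_le (T : finType) (A : rel T) y : symmetric A -> irreflexive A ->
  2 * dg A y <= al A.
Proof.
move=> sA iA.
have h : forall x, (A x y : nat) + (x == y) * dg A y <= dg A x.
  move=> x; case: (eqVneq x y) => [->|xy]; first by rewrite iA mul1n.
  by rewrite mul0n addn0 /dg (bigD1 y) //= leq_addr.
have : \sum_x ((A x y : nat) + (x == y) * dg A y) <= \sum_x dg A x.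
  by apply: leq_sum => x _; exact: h.
rewrite big_split /= sum_pick dg_sym //.
by rewrite /al; lia.
Qed.

Definition sig (T : finType) (A : rel T) v w := \sum_z ((z != w) * cc (rm A v) w z).

Lemma Ep_le (T : finType) (A : rel T) v w : Ep A v w <= dg (rm A v) w * sig A v w.
Proof.
rewrite /Ep /sig big_distrr /=; apply: leq_sum => z _.
case: (z != w); rewrite ?mul0n ?muln0 // !mul1n -mulnn.
by rewrite leq_mul2r cc_le orbT.
Qed.

Lemma sig_eq (T : finType) (A : rel T) v w : irreflexive A ->
  sig A v w = \sum_y ((rm A v w y : nat) * dg (rm (rm A v) w) y).
Proof.
move=> iA; rewrite /sig.
rewrite (eq_bigr (fun z => \sum_y ((z != w) * (rm A v w y && rm A v y z)))); last first.
  by move=> z _; rewrite /cc big_distrr.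
rewrite exchange_big /=; apply: eq_bigr => y _.
rewrite /dg big_distrr /=; apply: eq_bigr => z _.
case h : (rm A v w y) => /=; last by case: (z != w).
have yw : y != w by apply/eqP => e; subst; rewrite (rm_irr v iA) in h.
by rewrite /rm yw; case: (z != w); case: (A y z); case: (y != v); case: (z != v).
Qed.

Lemma sig_le1 (T : finType) (A : rel T) v w : irreflexive A ->
  sig A v w <= al (rm (rm A v) w).
Proof.
move=> iA; rewrite sig_eq //; apply: leq_sum => y _.
by case: (rm A v w y); rewrite ?mul1n ?mul0n.
Qed.

Lemma sig_le2 (T : finType) (A : rel T) v w : symmetric A -> irreflexive A ->
  2 * sig A v w <= dg (rm A v) w * al (rm (rm A v) w).
Proof.
move=> sA iA; rewrite sig_eq // big_distrr /= /dg big_distrl /=.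
apply: leq_sum => y _; rewrite mulnA (mulnC 2) -mulnA.
case: (rm A v w y); rewrite ?mul1n ?mul0n //.
apply: dg2_le; [apply: rm_sym; apply: rm_sym | apply: rm_irr; apply: rm_irr] => //.
Qed.

Lemma arith (W W2 s b D t2 t4 E sg a2 : nat) :
 W = W2 + 2 * s ^ 2 + 6 * b ^ 2 + 4 * D + 4 * E -> 4 * s = a2 + 2 * s + 2 * b ->
 t2 + 4 * D = a2 ^ 2 + 2 * a2 -> t4 + 2 * D = W2 + a2 -> t4 <= t2 ->
 E <= b * sg -> sg <= a2 -> 2 * sg <= b * a2 -> 0 < b -> 8 * s ^ 2 <= W -> a2 = 0.
Proof.
move=> hd ha t2e t4e t42 e1 e2 e3 bpos hW.
have [a ea] : exists a, a2 = 2 * a by exists (s - b); lia.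
have sab : s = a + b by lia.
subst a2 s.
have sq1 : (a + b) ^ 2 = a ^ 2 + 2 * (a * b) + b ^ 2 by rewrite sqrnD; lia.
have sq2 : (2 * a) ^ 2 = 4 * a ^ 2 by rewrite expnMn.
rewrite sq1 in hd hW; rewrite sq2 in t2e.
have hE : 3 * (a * b) <= a + E by lia.
have : a = 0; last by lia.
case: (leqP b 1) => hb.
  have b1 : b = 1 by lia.
  subst b; lia.
have : b * sg <= b * (2 * a) by rewrite leq_mul2l e2 orbT.
have : 2 * (a * b) <= a * b by nia.
nia.
Qed.

Lemma key_ineq (T : finType) (A : rel T) v w : symmetric A -> irreflexive A -> v != w ->
  (forall y, A v y = (y != v) && (y != w)) -> 0 < dg A w ->
  al A = 4 * dg A v -> 8 * (dg A v) ^ 2 <= WW A -> al (rm (rm A v) w) = 0.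
Proof.
move=> sA iA vw hv bpos hal hW.
have avw : A v w = false by rewrite hv eqxx andbF.
have s1 := rm_sym v sA; have i1 := rm_irr v iA.
have s2 := rm_sym w s1; have i2 := rm_irr w i1.
have [hd ha] := decomp sA iA vw hv.
have t2 := T2_formula s2 i2; have t4 := T4_formula s2 i2; have t42 := T4_le_T2 i2.
have e1 := Ep_le A v w; have e2 := sig_le1 v w iA; have e3 := sig_le2 v w sA iA.
rewrite (dgA1w sA vw avw) in e1 e3.
apply: (arith hd _ t2 t4 t42 e1 e2 e3 bpos hW).
by rewrite -hal.
Qed.

Lemma a4_nat n (E : {set {set 'I_n}}) : is_simple E ->
  8 * #|two_matchings E| + 2 * WW (adj E) = al (adj E) ^ 2 + 16 * #|four_cycles E|.
Proof.
move=> hs.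
have h1 : 8 * #|two_matchings E| = TT2 (adj E).
  rewrite -T2s_match //.
  exact: (card_sum22 (fun x y z t => [&& adj E x y, adj E z t, z != x, z != y, t != x & t != y])).
have h2 : 8 * #|four_cycles E| = TT4 (adj E).
  rewrite -T4s_card //.
  exact: (card_sum4 (fun x y z t => good E x y z t)).
have f1 := T2_formula (adj_sym E) (adj_irr E).
have f2 := T4_formula (adj_sym E) (adj_irr E).
lia.
Qed.

Lemma a4_int n (E : {set {set 'I_n}}) : is_simple E ->
  (8 * a4 E + 2 * (WW (adj E))%:Z = ((al (adj E)) ^ 2)%:Z)%R.
Proof.
move=> hs; have h := a4_nat hs.
rewrite /a4; lia.
Qed.

Lemma dg_card (T : finType) (A : rel T) x : dg A x = #|[set y | A x y]|.
Proof. by rewrite -sum1dep_card big_mkcond /=. Qed.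

Definition Kset n (v w : 'I_n) : {set {set 'I_n}} :=
  [set [set x; y] | x in [set v; w], y in ~: [set v; w]].

Lemma adjK n (v w : 'I_n) x y :
  adj (Kset v w) x y = ((x \in [set v; w]) && (y \notin [set v; w]))
                    || ((y \in [set v; w]) && (x \notin [set v; w])).
Proof.
set S := [set v; w].
rewrite adjE; apply/idP/idP.
  case/andP => nxy /imset2P [a b aS]; rewrite inE => bS e.
  have nab : a != b by apply/eqP => e'; subst; rewrite aS in bS.
  by case: (set2_eqP nab e) => -[-> ->]; rewrite aS bS /= ?orbT.
case/orP => /andP [h1 h2].
  have nxy : x != y by apply/eqP => e; subst; rewrite h1 in h2.
  by rewrite nxy /=; apply/imset2P; exists x y => //; rewrite inE.
have nxy : x != y by apply/eqP => e; subst; rewrite h1 in h2.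
by rewrite nxy /=; apply/imset2P; exists y x; [done | by rewrite inE | by rewrite setUC].
Qed.

Lemma K_simple n (v w : 'I_n) : is_simple (Kset v w).
Proof.
apply/forall_inP => e /imset2P [a b aS]; rewrite inE => bS ->.
have nab : a != b by apply/eqP => e'; subst; rewrite aS in bS.
by rewrite cards2 nab.
Qed.

Theorem lemma4p6 (n : nat) (E : {set {set 'I_n}}) :
  6 <= n ->
  sachs4_minimal (2 * n - 4) E ->
  max_deg E = n - 2 ->
  is_complete_bipartite 2 (n - 2) E.
Proof.
move=> n6 [hG hmin] hmax.
case/and3P: (hG) => hs hc /eqP hcard.
have sA := adj_sym E; have iA := adj_irr E.
have [v hv0] : exists v, deg E v = n - 2.
  have n0 : 0 < #|'I_n| by rewrite card_ord; lia.
  case: (eq_bigmax (deg E) n0) => v hv; exists v; by rewrite -hmax /max_deg hv.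
have dgv : dg (adj E) v = n - 2 by rewrite dg_card -hv0.
have cN : #|~: [set y | adj E v y]| = 2.
  by have := cardsC [set y | adj E v y]; rewrite card_ord -dg_card dgv; lia.
have vN : v \in ~: [set y | adj E v y] by rewrite !inE iA.
have [w [wv eNc]] := pair_with cN vN.
have vw : v != w by rewrite eq_sym.
have hv : forall y, adj E v y = (y != v) && (y != w).
  move=> y; move/setP/(_ y): eNc; rewrite !inE => e.
  by rewrite -negb_or -e negbK.
have avw : adj E v w = false by rewrite hv eqxx andbF.
have bpos : 0 < dg (adj E) w.
  move/forallP: hc => /(_ w) /forallP /(_ v).
  case/connectP => p pth lst.
  case: p pth lst => [_ /= e|y p]; first by rewrite e eqxx in vw.
  rewrite /= => /andP [awy _] _.
  by rewrite /dg (bigD1 y) //= awy.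
have halE : al (adj E) = 4 * (n - 2) by rewrite handshake // hcard; clear -n6; lia.
pose K := Kset v w.
have hsK : is_simple K := K_simple v w.
have adjKv : forall y, adj K v y = (y != v) && (y != w).
  move=> y; rewrite adjK !inE eqxx /=.
  by case: (y == v); case: (y == w).
have adjKw : forall y, adj K w y = (y != v) && (y != w).
  move=> y; rewrite adjK !inE eqxx orbT /=.
  by case: (y == v); case: (y == w).
have sK := adj_sym K; have iK := adj_irr K.
have dgKv : dg (adj K) v = n - 2 by rewrite -dgv; apply: eq_bigr => y _; rewrite adjKv hv.
have dgKw : dg (adj K) w = n - 2 by rewrite -dgKv; apply: eq_bigr => y _; rewrite adjKv adjKw.
have K2e : forall x y, rm (rm (adj K) v) w x y = false.
  move=> x y; rewrite /rm adjK !inE.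
  by case: (x == v); case: (x == w); case: (y == v); case: (y == w).
have alK2 : al (rm (rm (adj K) v) w) = 0.
  by apply: big1 => x _; apply: big1 => y _; rewrite K2e.
have [hdK haK] := decomp sK iK vw adjKv.
have alK : al (adj K) = 4 * (n - 2) by rewrite haK alK2 dgKv dgKw; clear -n6; lia.
have cardK : #|K| = 2 * n - 4 by have := handshake hsK; rewrite alK; move: #|K| => k; clear -n6; lia.
have connK : connected_graph K.
  have toV : forall x, connect (adj K) x v.
    move=> x; case: (eqVneq x v) => [->|xv]; first exact: connect0.
    case: (eqVneq x w) => [->|xw]; last by apply: connect1; rewrite sK adjKv xv xw.
    have : ~: [set v; w] != set0.
      rewrite -card_gt0; have := cardsC [set v; w]; rewrite card_ord cards2 vw /=; move: #|~: _| => c; clear -n6; lia.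
    case/set0Pn => y; rewrite !inE negb_or => /andP [yv yw].
    apply: (connect_trans (y := y)); apply: connect1.
      by rewrite adjKw yv yw.
    by rewrite sK adjKv yv yw.
  apply/forallP => x; apply/forallP => y.
  apply: (connect_trans (toV x)); by rewrite (sym_connect_sym sK) toV.
have KG : in_Gnm (2 * n - 4) K by rewrite /in_Gnm hsK connK cardK eqxx.
have ha4 := hmin K KG.
have eE := a4_int hs; have eK := a4_int hsK.
rewrite halE in eE; rewrite alK in eK.
have WKge : 8 * (n - 2) ^ 2 <= WW (adj K) by rewrite hdK dgKv dgKw; clear -n6; lia.
have WEge : WW (adj K) <= WW (adj E).
  have : ((WW (adj K))%:Z <= (WW (adj E))%:Z)%R by clear -ha4 eE eK; lia.
  by rewrite lez_nat.
have hW : 8 * (dg (adj E) v) ^ 2 <= WW (adj E) by rewrite dgv; exact: leq_trans WKge WEge.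
have hal' : al (adj E) = 4 * dg (adj E) v by rewrite halE dgv.
have a2 := key_ineq sA iA vw hv bpos hal' hW.
have [hdE haE] := decomp sA iA vw hv.
have b_s : dg (adj E) w = n - 2 by move: haE; rewrite a2 halE dgv; clear -n6; lia.
have A2f : forall x y, rm (rm (adj E) v) w x y = false.
  move=> x y; apply/negbTE/negP => h.
  have : 0 < al (rm (rm (adj E) v) w) by rewrite /al (bigD1 x) //= /dg (bigD1 y) //= h.
  by rewrite a2.
have hw : forall y, adj E w y = (y != v) && (y != w).
  have sub : [set y | adj E w y] \subset [set y | adj E v y].
    apply/subsetP => y; rewrite !inE hv => awy; apply/andP; split.
      by apply/eqP => e; subst; rewrite sA avw in awy.
    by apply/eqP => e; subst; rewrite iA in awy.
  have eqS : [set y | adj E w y] = [set y | adj E v y].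
    by apply/eqP; rewrite eqEcard sub -!dg_card b_s dgv leqnn.
  move=> y; move/setP/(_ y): eqS; rewrite !inE => ->; exact: hv.
have sameadj : forall x y, adj E x y = adj K x y.
  move=> x y.
  case: (eqVneq x v) => [->|xv]; first by rewrite hv adjKv.
  case: (eqVneq x w) => [->|xw]; first by rewrite hw adjKw.
  case: (eqVneq y v) => [->|yv]; first by rewrite sA sK hv adjKv.
  case: (eqVneq y w) => [->|yw]; first by rewrite sA sK hw adjKw.
  have := A2f x y; rewrite /rm xv yv xw yw !andbT => ->.
  by rewrite adjK !inE (negbTE xv) (negbTE xw) (negbTE yv) (negbTE yw).
have EK : E = K.
  apply/setP => e; apply/idP/idP => he.
    have [x [y [nxy -> axy]]] := edge2 hs he.
    by move: axy; rewrite sameadj => /andP [_].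
  have [x [y [nxy -> axy]]] := edge2 hsK he.
  by move: axy; rewrite -sameadj => /andP [_].
exists [set v; w], (~: [set v; w]); split.
- by rewrite disjoints_subset setCK subxx.
- exact: setUCr.
- by rewrite cards2 vw.
- have := cardsC [set v; w]; rewrite card_ord cards2 vw /=; move: #|~: _| => c; clear -n6; lia.
- exact: EK.
Qed.
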